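(* Let $P$ be a linear process and suppose $P\to^* Q$. Then: (1) $\mathcal{N}(Q)\subseteq\mathcal{N}(P)$; (2) for every $a \in \mathcal{N}(P)\setminus\mathcal{N}(Q)$ there exist processes $P_a, P'_a$ such that $P\to^* P_a\to P'_a\to^* Q$, $a\notin \mathcal{N}(P'_a)$, $\mathcal{N}(P'_a)\cup\{a\}=\mathcal{N}(P_a)$, and $\mathrm{sync}(a,P_a)$.
   Context: Processes: $P ::= \mathbf{0} \mid \alpha.P \mid P\,|\,Q$ where $\alpha$ is a name $a$ or a co-name $\bar a$ (with $\bar{\bar a}=a$). Structural congruence $\equiv$ is the smallest congruence with $P|\mathbf{0}\equiv P$, $P|Q\equiv Q|P$, $P|(Q|R)\equiv(P|Q)|R$. Reduction $\to$ is the smallest relation with $a.P\,|\,\bar a.Q\to P\,|\,Q$, closed under parallel contexts and under $\equiv$; $\to^*$ is its reflexive–transitive closure. A process is linear if each name occurs at most once as an input $a$ and at most once as an output $\bar a$. $\mathcal{N}(P)$ is the set of names occurring in $P$: $\mathcal{N}(\mathbf{0})=\emptyset$, $\mathcal{N}(a.P)=\mathcal{N}(\bar a.P)=\{a\}\cup\mathcal{N}(P)$, $\mathcal{N}(P|Q)=\mathcal{N}(P)\cup\mathcal{N}(Q)$. $\mathrm{sync}(a,P)$ holds iff there exist $P_1,\dots,P_4$ with $P\equiv P_1\,|\,a.P_2$ and $P\equiv P_3\,|\,\bar a.P_4$. *)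

(* Defs.v *)
From Stdlib Require Import List.
Import ListNotations.

Inductive act : Type :=
| In : nat -> act
| Out : nat -> act.

Definition co (x : act) : act :=
  match x with In a => Out a | Out a => In a end.

Definition subj (x : act) : nat := match x with In a => a | Out a => a end.

Inductive proc : Type :=
| Nil : proc
| Pre : act -> proc -> proc
| Par : proc -> proc -> proc.

Inductive scong : proc -> proc -> Prop :=
| sc_refl : forall P, scong P P
| sc_sym : forall P Q, scong P Q -> scong Q P
| sc_trans : forall P Q R, scong P Q -> scong Q R -> scong P R
| sc_pre : forall x P Q, scong P Q -> scong (Pre x P) (Pre x Q)
| sc_par : forall P P' Q Q', scong P P' -> scong Q Q' -> scong (Par P Q) (Par P' Q')
| sc_nil : forall P, scong (Par P Nil) P
| sc_comm : forall P Q, scong (Par P Q) (Par Q P)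
| sc_assoc : forall P Q R, scong (Par P (Par Q R)) (Par (Par P Q) R).

Inductive red : proc -> proc -> Prop :=
| red_comm : forall a P Q, red (Par (Pre (In a) P) (Pre (Out a) Q)) (Par P Q)
| red_par : forall P P' Q, red P P' -> red (Par P Q) (Par P' Q)
| red_struct : forall P P' Q Q', scong P P' -> red P' Q' -> scong Q' Q -> red P Q.

Inductive reds : proc -> proc -> Prop :=
| reds_refl : forall P, reds P P
| reds_step : forall P Q R, red P Q -> reds Q R -> reds P R.

Fixpoint names (P : proc) : nat -> Prop :=
  match P with
  | Nil => fun _ => False
  | Pre x P' => fun b => b = subj x \/ names P' b
  | Par P1 P2 => fun b => names P1 b \/ names P2 b
  end.

Fixpoint inputs (P : proc) : list nat :=
  match P with
  | Nil => []
  | Pre (In a) P' => a :: inputs P'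
  | Pre (Out _) P' => inputs P'
  | Par P1 P2 => inputs P1 ++ inputs P2
  end.

Fixpoint outputs (P : proc) : list nat :=
  match P with
  | Nil => []
  | Pre (Out a) P' => a :: outputs P'
  | Pre (In _) P' => outputs P'
  | Par P1 P2 => outputs P1 ++ outputs P2
  end.

Definition linear (P : proc) : Prop := NoDup (inputs P) /\ NoDup (outputs P).

Definition sync (a : nat) (P : proc) : Prop :=
  exists P1 P2 P3 P4,
    scong P (Par P1 (Pre (In a) P2)) /\ scong P (Par P3 (Pre (Out a) P4)).

(* Main.v *)
Require Import Defs.
From Stdlib Require Import Classical.

Lemma scong_names : forall P Q, scong P Q -> forall b, names P b <-> names Q b.
Proof.
  induction 1; intro b; simpl;
  repeat match goal with H: forall b : nat, _ <-> _ |- _ => specialize (H b) end;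
  tauto.
Qed.

Lemma scong_swap : forall X Y Z, scong (Par (Par X Y) Z) (Par (Par X Z) Y).
Proof.
  intros X Y Z.
  eapply sc_trans. apply sc_sym. apply sc_assoc.
  eapply sc_trans. apply sc_par. apply sc_refl. apply sc_comm.
  apply sc_assoc.
Qed.

Lemma red_key : forall P P', red P P' -> exists c,
  (forall b, names P b <-> (names P' b \/ b = c)) /\ sync c P.
Proof.
  induction 1.
  - exists a. split.
    + intro b; simpl; tauto.
    + exists (Pre (Out a) Q), P, (Pre (In a) P), Q. split.
      apply sc_comm. apply sc_refl.
  - destruct IHred as [c [Hn [P1 [P2 [P3 [P4 [H1 H2]]]]]]].
    exists c. split.
    + intro b; simpl; rewrite (Hn b); tauto.
    + exists (Par P1 Q), P2, (Par P3 Q), P4. split.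
      * eapply sc_trans. apply sc_par. exact H1. apply sc_refl. apply scong_swap.
      * eapply sc_trans. apply sc_par. exact H2. apply sc_refl. apply scong_swap.
  - destruct IHred as [c [Hn [P1 [P2 [P3 [P4 [H2 H3]]]]]]].
    exists c. split.
    + intro b. rewrite (scong_names _ _ H b), (Hn b), (scong_names _ _ H1 b). tauto.
    + exists P1, P2, P3, P4. split; eapply sc_trans; eauto.
Qed.

Lemma reds_names : forall P Q, reds P Q -> forall b, names Q b -> names P b.
Proof.
  induction 1; intros b Hb; auto.
  destruct (red_key _ _ H) as [c [Hn _]]. apply Hn. left. auto.
Qed.

Theorem corollary1 (P Q : proc) :
  linear P -> reds P Q ->
  (forall b, names Q b -> names P b) /\
  (forall a, names P a -> ~ names Q a ->
     exists Pa Pa',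
       reds P Pa /\ red Pa Pa' /\ reds Pa' Q /\
       ~ names Pa' a /\
       (forall b, names Pa b <-> (names Pa' b \/ b = a)) /\
       sync a Pa).
Proof.
  intros _ HR. split. apply reds_names; auto.
  induction HR as [P|P P1 Q Hr HR IH]; intros a Ha HQ.
  - contradiction.
  - destruct (classic (names P1 a)) as [H1|H1].
    + destruct (IH a H1 HQ) as [Pa [Pa' [A [B [C [D [E F]]]]]]].
      exists Pa, Pa'. repeat split; auto. eapply reds_step; eauto.
      apply E. apply E.
    + destruct (red_key _ _ Hr) as [c [Hn Hs]].
      assert (a = c) by (destruct (proj1 (Hn a) Ha); tauto). subst c.
      exists P, P1. repeat split; auto. apply reds_refl.
      apply Hn. apply Hn.
Qed.
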